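(* Let $f$ be a face. Then (1) $\|\mathbf 1_{\{f\text{ is vacant}\}}\|_f\le\lambda^{-1/4}$ for every $\lambda>0$; and (2) for each $c<\frac14$ and all sufficiently large $\lambda$, $\|\mathbf 1_{\{f\text{ is occupied}\}}\|_f\le1-c\lambda^{-1/2}$.
   Context: Tiles: $T_{(x,y)}=[x-1,x+1]\times[y-1,y+1]$; $\Omega=\{\sigma\in\{0,1\}^{\mathbb{Z}^2}: \sigma(u)=\sigma(v)=1,u\ne v\Rightarrow\mathrm{int}(T_u)\cap\mathrm{int}(T_v)=\emptyset\}$. A face is a unit square $[a,a+1]\times[b,b+1]$, $a,b\in\mathbb{Z}$ (itself a $1\times1$ rectangle); it is vacant in $\sigma$ if contained in no tile of $\sigma$, otherwise occupied. Rectangles: closed axis-parallel with integer corners; $R_{K\times L}=[0,K]\times[0,L]$. For a rectangle $\Lambda$: $w_{\Lambda,\lambda}(\sigma)=\lambda^{-\frac14\#\{\text{vacant faces}\subset\Lambda\}}$; $\Omega^{\mathrm{per}}_\Lambda$ = configurations periodic under $(\mathrm{Width}\Lambda,0),(0,\mathrm{Height}\Lambda)$; $\mu^{\mathrm{per}}_{\Lambda,\lambda}\propto w_{\Lambda,\lambda}$ on $\Omega^{\mathrm{per}}_\Lambda$. For $(\tau f)(\sigma)=f(\sigma\circ\tau)$; for $R=[x_0,x_0+K]\times[y_0,y_0+L]$, $T^R$ is the group generated by reflections through lines $x=x_0+mK$, $y=y_0+nL$; if $2K\mid\mathrm{Width}\Lambda$, $2L\mid\mathrm{Height}\Lambda$,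 $T^R_\Lambda$ is its quotient by translations in $\mathrm{Width}(\Lambda)\mathbb{Z}\times\mathrm{Height}(\Lambda)\mathbb{Z}$, $\|g\|_{R|\Lambda}=[\mu^{\mathrm{per}}_{\Lambda,\lambda}(\prod_{\tau\in T^R_\Lambda}\tau g)]^{1/\#T^R_\Lambda}$ for $g$ depending only on $\sigma|_{R\cap\mathbb{Z}^2}$, and $\|g\|_R=\limsup_{n\to\infty}\|g\|_{R|R_{n!\times n!}}$. *)

(* Defs.v *)
From HB Require Import structures.
From mathcomp Require Import all_boot all_order all_algebra.
From mathcomp Require Import all_classical all_reals all_analysis.
Set Implicit Arguments. Unset Strict Implicit. Unset Printing Implicit Defensive.
Import Order.TTheory GRing.Theory Num.Theory.
Local Open Scope ring_scope.
Local Open Scope classical_set_scope.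

(* A configuration sigma : Z^2 -> {0,1}; sigma u = true means a tile at u. *)
Definition config := (int * int -> bool)%type.

Definition cbox (R : realType) (x1 x2 y1 y2 : R) : set (R * R) :=
  [set p | (x1 <= p.1 <= x2) && (y1 <= p.2 <= y2)].
Definition obox (R : realType) (x1 x2 y1 y2 : R) : set (R * R) :=
  [set p | (x1 < p.1 < x2) && (y1 < p.2 < y2)].

Definition tile (R : realType) (u : int * int) : set (R * R) :=
  cbox (u.1%:~R - 1) (u.1%:~R + 1) (u.2%:~R - 1) (u.2%:~R + 1).
Definition tile_int (R : realType) (u : int * int) : set (R * R) :=
  obox (u.1%:~R - 1) (u.1%:~R + 1) (u.2%:~R - 1) (u.2%:~R + 1).

Definition in_Omega (R : realType) (sigma : config) : Prop :=
  forall u v : int * int, u <> v -> sigma u -> sigma v ->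
    @tile_int R u `&` @tile_int R v = set0.

Definition face (R : realType) (a b : int) : set (R * R) :=
  cbox a%:~R (a%:~R + 1) b%:~R (b%:~R + 1).

Definition vacant (R : realType) (sigma : config) (a b : int) : Prop :=
  ~ (exists u : int * int, sigma u /\ @face R a b `<=` @tile R u).

(* Number of vacant faces contained in Lambda = R_{W x H} = [0,W] x [0,H]:
   these faces are exactly [a,a+1]x[b,b+1] with 0 <= a < W, 0 <= b < H. *)
Definition nvacant (R : realType) (sigma : config) (W H : nat) : nat :=
  \sum_(i < W) \sum_(j < H) `[< vacant R sigma (Posz i) (Posz j) >].

Definition weight (R : realType) (lam : R) (W H : nat) (sigma : config) : R :=
  lam `^ (- (4%:R^-1) * (nvacant R sigma W H)%:R).

(* Configurations periodic under (W,0),(0,H) (W,H > 0) are in bijection with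
   their restriction s to [0,W) x [0,H); per_ext s is the periodic extension. *)
Definition per_ext (W H : nat) (s : {ffun 'I_W * 'I_H -> bool}) : config :=
  fun u => [exists i : 'I_W * 'I_H,
     [&& (Posz i.1 == (u.1 %% (Posz W))%Z), (Posz i.2 == (u.2 %% (Posz H))%Z)
       & s i]].

Definition mu_per (R : realType) (lam : R) (W H : nat) (F : config -> R) : R :=
  (\sum_(s : {ffun 'I_W * 'I_H -> bool} | `[< in_Omega R (per_ext s) >])
      weight lam W H (per_ext s) * F (per_ext s)) /
  (\sum_(s : {ffun 'I_W * 'I_H -> bool} | `[< in_Omega R (per_ext s) >])
      weight lam W H (per_ext s)).

(* Reflection group T^R for R = [x0,x0+K] x [y0,y0+L], generated by the
   reflections through x = x0 + mK and y = y0 + nL.  In one coordinate its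
   elements are x |-> x + 2mK and x |-> 2(x0 + mK) - x.  Modulo translations
   by W Z (2K | W) a complete system of representatives is given by
   m in [0, W/(2K)) for both kinds; e = true marks the reflections. *)
Definition refl1 (x0 : int) (K : nat) (e : bool) (m : nat) (x : int) : int :=
  if e then 2 * x0 + 2 * (Posz m) * (Posz K) - x
  else x + 2 * (Posz m) * (Posz K).

Definition tauR (x0 y0 : int) (K L W H : nat)
  (t : (bool * 'I_(W %/ (2 * K))) * (bool * 'I_(H %/ (2 * L))))
  (u : int * int) : int * int :=
  (refl1 x0 K t.1.1 t.1.2 u.1, refl1 y0 L t.2.1 t.2.2 u.2).

(* ||g||_{R|Lambda} = [ mu^per( prod_{tau in T^R_Lambda} tau g ) ]^{1/#T^R_Lambda},
   with (tau g)(sigma) = g(sigma o tau), Lambda = R_{W x H}.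
   (Meaningful when 2K | W and 2L | H.) *)
Definition normRL (R : realType) (lam : R) (x0 y0 : int) (K L W H : nat)
  (g : config -> R) : R :=
  (mu_per lam W H (fun sigma =>
     \prod_(t : (bool * 'I_(W %/ (2 * K))) * (bool * 'I_(H %/ (2 * L))))
        g (fun u => sigma (@tauR x0 y0 K L W H t u))))
  `^ ((#|{: (bool * 'I_(W %/ (2 * K))) * (bool * 'I_(H %/ (2 * L)))}|)%:R^-1).

Definition normR (R : realType) (lam : R) (x0 y0 : int) (K L : nat)
  (g : config -> R) : \bar R :=
  limn_esup (fun n => (normRL lam x0 y0 K L n`! n`! g)%:E).

Definition vacant_ind (R : realType) (a b : int) (sigma : config) : R :=
  (`[< vacant R sigma a b >])%:R.
Definition occupied_ind (R : realType) (a b : int) (sigma : config) : R :=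
  (`[< ~ vacant R sigma a b >])%:R.

(* Main.v *)
Require Import Defs.
From HB Require Import structures.
From mathcomp Require Import all_boot all_order all_algebra.
From mathcomp Require Import all_classical all_reals all_analysis.
From mathcomp Require Import zify ring lra.
Import Order.TTheory GRing.Theory Num.Theory.
Local Open Scope ring_scope.
Local Open Scope classical_set_scope.

Definition occ (s : config) (a b : int) : bool :=
  [|| s (a, b), s (a + 1, b), s (a, b + 1) | s (a + 1, b + 1)].

Definition sep (u v : int * int) : bool :=
  [|| u.1 + 2 <= v.1, v.1 + 2 <= u.1, u.2 + 2 <= v.2 | v.2 + 2 <= u.2].

Section Geo.
Variable R : realType.

Lemma intR_le (m n : int) : ((m%:~R : R) <= n%:~R) = (m <= n).
Proof. by rewrite ler_int. Qed.

Lemma face_sub_tile (a b : int) (u : int * int) :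
  (@face R a b `<=` @tile R u) <-> ((a <= u.1 <= a + 1) && (b <= u.2 <= b + 1)).
Proof.
split.
- move=> H.
  have h1 := H (a%:~R, b%:~R).
  have h2 := H (a%:~R + 1, b%:~R + 1).
  rewrite /face /tile /cbox /= in h1 h2.
  have /andP[/andP[A1 A2] /andP[A3 A4]] : (u.1%:~R - 1 <= (a%:~R:R) <= u.1%:~R + 1) &&
      (u.2%:~R - 1 <= (b%:~R:R) <= u.2%:~R + 1).
    by apply: h1; rewrite !lexx !lerDl ler01.
  have /andP[/andP[B1 B2] /andP[B3 B4]] : (u.1%:~R - 1 <= (a%:~R:R) + 1 <= u.1%:~R + 1) &&
      (u.2%:~R - 1 <= (b%:~R:R) + 1 <= u.2%:~R + 1).
    by apply: h2; rewrite !lexx !lerDl ler01.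
  have e1 : (a%:~R : R) <= u.1%:~R by lra.
  have e2 : (u.1%:~R : R) <= (a + 1)%:~R by rewrite intrD; lra.
  have e3 : (b%:~R : R) <= u.2%:~R by lra.
  have e4 : (u.2%:~R : R) <= (b + 1)%:~R by rewrite intrD; lra.
  by rewrite !intR_le in e1 e2 e3 e4; rewrite e1 e2 e3 e4.
- move=> /andP[/andP[e1 e2] /andP[e3 e4]] [x y].
  rewrite -!intR_le !intrD in e1 e2 e3 e4.
  rewrite /face /tile /cbox /= => /andP[/andP[f1 f2] /andP[f3 f4]].
  apply/andP; split; apply/andP; split; lra.
Qed.

Lemma vacantE (s : config) a b : vacant R s a b <-> ~~ occ s a b.
Proof.
rewrite /vacant /occ; split.
- move=> H; apply/negP => Ho; apply: H.
  case/orP: Ho => [Ho|]; first by exists (a, b); split; [done | apply/face_sub_tile => /=; lia].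
  case/orP => [Ho|]; first by exists (a + 1, b); split; [done | apply/face_sub_tile => /=; lia].
  case/orP => [Ho|Ho]; first by exists (a, b + 1); split; [done | apply/face_sub_tile => /=; lia].
  by exists (a + 1, b + 1); split; [done | apply/face_sub_tile => /=; lia].
- move=> /negP H [[u1 u2] [su /face_sub_tile /= /andP[/andP[e1 e2] /andP[e3 e4]]]].
  apply: H.
  have [E1|E1] : u1 = a \/ u1 = a + 1 by lia.
  all: have [E2|E2] : u2 = b \/ u2 = b + 1 by lia.
  all: by rewrite -E1 -E2 su ?orbT.
Qed.

Lemma vacant_asbool (s : config) a b : `[< vacant R s a b >] = ~~ occ s a b.
Proof. by apply/idP/idP => [/asboolP/vacantE|/vacantE/asboolP]. Qed.

Lemma occupied_asbool (s : config) a b : `[< ~ vacant R s a b >] = occ s a b.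
Proof.
apply/idP/idP => [/asboolP H|H]; last by apply/asboolP => /vacantE; rewrite H.
by apply/negPn/negP => /vacantE.
Qed.

Lemma tile_int_disj (u v : int * int) :
  (@tile_int R u `&` @tile_int R v = set0) <-> sep u v.
Proof.
rewrite /sep; split.
- move=> H; apply/negPn/negP; rewrite !negb_or -!ltNge; move=> /and4P[h1 h2 h3 h4].
  rewrite -!(ltr_int R) !intrD !mulr1z in h1 h2 h3 h4.
  have P : (@tile_int R u `&` @tile_int R v) (((u.1 + v.1)%:~R / 2 : R), ((u.2 + v.2)%:~R / 2 : R)).
    by split; rewrite /tile_int /obox /= !intrD; repeat (apply/andP; split); lra.
  by move: P; rewrite H.
- move=> H; apply/seteqP; split => // [[x y]] [].
  rewrite /tile_int /obox /= => /andP[/andP[f1 f2] /andP[f3 f4]] /andP[/andP[g1 g2] /andP[g3 g4]].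
  case/or4P: H; rewrite -(ler_int R) !intrD ?mulr1z => h; lra.
Qed.

Lemma in_OmegaE (s : config) :
  in_Omega R s <-> (forall u v, u <> v -> s u -> s v -> sep u v).
Proof.
split => H u v uv su sv; first by apply/tile_int_disj; exact: H.
by apply/tile_int_disj; exact: H.
Qed.

End Geo.

Local Close Scope classical_set_scope.

Lemma per_ext_shift (W H : nat) s (x y k l : int) :
  per_ext (W:=W) (H:=H) s (x + k * W, y + l * H) = per_ext s (x, y).
Proof.
rewrite /per_ext /=; apply: eq_existsb => i.
by rewrite addrC (modzMDl k x) addrC (modzMDl l y).
Qed.

Lemma per_ext_in (W H : nat) s (i : 'I_W * 'I_H) :
  per_ext s (Posz i.1, Posz i.2) = s i.
Proof.
rewrite /per_ext /= !modz_small; last first.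
- by apply/andP; split => //; rewrite ltz_nat.
- by apply/andP; split => //; rewrite ltz_nat.
apply/existsP/idP => [[j /and3P[/eqP e1 /eqP e2 sj]]|si].
  move: e1 e2 => [e1] [e2].
  suff -> : i = j by [].
  by case: i j e1 e2 {sj} => [i1 i2] [j1 j2] /= e1 e2; congr (_, _); apply: val_inj.
by exists i; rewrite !eqxx.
Qed.

Lemma per_ext_ffun (W H : nat) (F : int -> int -> bool) (x y : int) :
  (0 < W)%N -> (0 < H)%N ->
  per_ext [ffun i : 'I_W * 'I_H => F (Posz i.1) (Posz i.2)] (x, y) = F (x %% W)%Z (y %% H)%Z.
Proof.
move=> W0 H0.
have Wp : (0 : int) < W by rewrite ltz_nat.
have Hp : (0 : int) < H by rewrite ltz_nat.
have Wn : (Posz W != 0) by rewrite gt_eqF.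
have Hn : (Posz H != 0) by rewrite gt_eqF.
have := ltz_pmod x Wp; have := modz_ge0 x Wn.
have := ltz_pmod y Hp; have := modz_ge0 y Hn.
move=> a1 a2 a3 a4.
have hx : (`|(x %% W)%Z|%N < W)%N by lia.
have hy : (`|(y %% H)%Z|%N < H)%N by lia.
have ex : Posz `|(x %% W)%Z|%N = (x %% W)%Z by lia.
have ey : Posz `|(y %% H)%Z|%N = (y %% H)%Z by lia.
rewrite /per_ext /=; apply/existsP/idP => [[j /and3P[/eqP e1 /eqP e2]]|Fi].
  by rewrite ffunE -e1 -e2.
by exists (Ordinal hx, Ordinal hy); rewrite /= ex ey !eqxx ffunE /= ex ey.
Qed.

Lemma occ_comp (s : config) f g a b a' b' :
  ((f a = a' /\ f (a + 1) = a' + 1) \/ (f a = a' + 1 /\ f (a + 1) = a')) ->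
  ((g b = b' /\ g (b + 1) = b' + 1) \/ (g b = b' + 1 /\ g (b + 1) = b')) ->
  occ (fun u => s (f u.1, g u.2)) a b = occ s a' b'.
Proof.
rewrite /occ /= => [[] [-> ->]] [] [-> ->].
all: by case: (s (a', b')); case: (s (a' + 1, b')); case: (s (a', b' + 1));
  case: (s (a' + 1, b' + 1)).
Qed.

Definition shiftp (a : int) (e : bool) (m : nat) : int :=
  if e then a + 2 * Posz m - 1 else a + 2 * Posz m.

Lemma refl1_pts (a : int) e m :
  let f := refl1 a 1 e m in
  (f a = shiftp a e m /\ f (a + 1) = shiftp a e m + 1) \/
  (f a = shiftp a e m + 1 /\ f (a + 1) = shiftp a e m).
Proof. rewrite /refl1 /shiftp; case: e; [right|left]; split; lia. Qed.

Lemma occ_tau (W H : nat) (s : config) a b t :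
  occ (fun u => s (@tauR a b 1 1 W H t u)) a b =
  occ s (shiftp a t.1.1 t.1.2) (shiftp b t.2.1 t.2.2).
Proof.
rewrite /tauR; apply: (occ_comp s (refl1 a 1 t.1.1 t.1.2) (refl1 b 1 t.2.1 t.2.2)).
all: exact: refl1_pts.
Qed.

Lemma cover_shift (S : nat) (a x : int) : (0 < S)%N ->
  exists e (m : nat), (m < S)%N /\ exists k : int, shiftp a e m = x + k * (2 * S)%N.
Proof.
move=> S0.
set N : int := Posz (2 * S)%N.
have N0 : 0 < N by rewrite /N ltz_nat; lia.
have := divz_eq (x - a) N.
set q := ((x - a) %/ N)%Z; set d := ((x - a) %% N)%Z => E.
have d0 : 0 <= d by apply: modz_ge0; rewrite gt_eqF.
have dN : d < N by apply: ltz_pmod.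
have [dd|od] := boolP (~~ odd `|d|%N).
- exists false, (`|d|%N./2); split.
    rewrite /N in dN; lia.
  exists (- q); rewrite /shiftp.
  have : (`|d|%N./2).*2 = `|d|%N by rewrite -[RHS]odd_double_half (negbTE dd).
  rewrite /N in E dN *; lia.
- have hd : (`|d|%N./2).*2 + 1 = `|d|%N by rewrite -[RHS]odd_double_half (negbNE od) addnC.
  have [last|notlast] := boolP (`|d|%N == (2 * S).-1).
  + exists true, 0%N; split => //; exists (- q - 1); rewrite /shiftp.
    rewrite /N in E dN *; lia.
  + exists true, (`|d|%N./2).+1; split.
      rewrite /N in dN; lia.
    exists (- q); rewrite /shiftp; rewrite /N in E dN *; lia.
Qed.

Lemma occ_per_shift (W H : nat) s (x y k l : int) :
  occ (per_ext (W:=W) (H:=H) s) (x + k * W) (y + l * H) = occ (per_ext s) x y.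
Proof.
have e1 : x + k * W + 1 = x + 1 + k * W by lia.
have e2 : y + l * H + 1 = y + 1 + l * H by lia.
rewrite /occ e1 e2 !per_ext_shift.
by [].
Qed.

Lemma prod_ind (R : realType) (T : finType) (P : pred T) :
  \prod_(t : T) ((P t)%:R : R) = ([forall t, P t])%:R.
Proof.
case: (boolP [forall t, P t]) => [/forallP H|/forallPn [t0 nt0]].
  by rewrite big1 // => t _; rewrite H.
by rewrite (bigD1 t0) //= (negbTE nt0) mul0r.
Qed.

Lemma all_faces (W S : nat) (s : {ffun 'I_W * 'I_W -> bool}) (f : bool -> bool) a b :
  (0 < S)%N -> W = (2 * S)%N ->
  (forall t : (bool * 'I_(W %/ (2 * 1))) * (bool * 'I_(W %/ (2 * 1))),
     f (occ (fun u => per_ext s (@tauR a b 1 1 W W t u)) a b)) ->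
  forall x y, f (occ (per_ext s) x y).
Proof.
move=> S0 WS H x y.
have [e1 [m1 [hm1 [k1 E1]]]] := cover_shift S a x S0.
have [e2 [m2 [hm2 [k2 E2]]]] := cover_shift S b y S0.
have hS : (W %/ (2 * 1))%N = S by rewrite WS muln1 mulKn.
have hm1' : (m1 < W %/ (2 * 1))%N by rewrite hS.
have hm2' : (m2 < W %/ (2 * 1))%N by rewrite hS.
have := H ((e1, Ordinal hm1'), (e2, Ordinal hm2')).
rewrite occ_tau /= E1 E2 -WS.
by rewrite (occ_per_shift W W s x y k1 k2).
Qed.

Set Implicit Arguments.

Definition valid (s : config) := forall u v, u <> v -> s u -> s v -> sep u v.
Definition perfect (s : config) := forall x y, occ s x y.
Definition cov (s : config) (x y p q : int) :=
  s (p, q) /\ (p = x \/ p = x + 1) /\ (q = y \/ q = y + 1).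

Ltac covt := split => //; split; first [by left; lia | by right; lia].

Section Struct.
Variable s : config.
Hypothesis vs : valid s.
Hypothesis ps : perfect s.

Lemma cov_ex x y : exists p q, cov s x y p q.
Proof.
have := ps x y; rewrite /occ => /or4P[h|h|h|h].
- by exists x, y; split => //; split; left.
- by exists (x + 1), y; split => //; split; [right|left].
- by exists x, (y + 1); split => //; split; [left|right].
- by exists (x + 1), (y + 1); split => //; split; right.
Qed.

Lemma cov_uniq x y p q p' q' : cov s x y p q -> cov s x y p' q' -> p = p' /\ q = q'.
Proof.
move=> [h1 [e1 e2]] [h2 [e3 e4]].
case: (boolP ((p, q) == (p', q'))) => [/eqP [-> ->]|ne]; first by [].
have := @vs (p, q) (p', q') (elimN eqP ne) h1 h2.
rewrite /sep /=; lia.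
Qed.

Lemma stepX x y p q p' q' : cov s x y p q -> cov s (x + 1) y p' q' ->
  p' = (if p == x + 1 then x + 1 else x + 2).
Proof.
move=> c1 c2; case: ifP => [/eqP E|/negbT NE].
  have c1' : cov s (x + 1) y p q.
    by case: c1 => [h [_ e2]]; split => //; split => //; left.
  by have [<- _] := cov_uniq c1' c2.
case: c1 => [h1 [e1 e2]]; case: c2 => [h2 [e3 e4]].
have px : p = x by move/eqP: NE; lia.
case: e3 => [E3|]; last by lia.
have := @vs (p, q) (p', q') _ h1 h2.
rewrite /sep /=.
have ne : (p, q) <> (p', q') by move=> [E _]; lia.
move/(_ ne); lia.
Qed.

Lemma stepY x y p q p' q' : cov s x y p q -> cov s x (y + 1) p' q' ->
  q' = (if q == y + 1 then y + 1 else y + 2).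
Proof.
move=> c1 c2; case: ifP => [/eqP E|/negbT NE].
  have c1' : cov s x (y + 1) p q.
    by case: c1 => [h [e1 _]]; split => //; split => //; left.
  by have [_ <-] := cov_uniq c1' c2.
case: c1 => [h1 [e1 e2]]; case: c2 => [h2 [e3 e4]].
have qy : q = y by move/eqP: NE; lia.
case: e4 => [E4|]; last by lia.
have := @vs (p, q) (p', q') _ h1 h2.
rewrite /sep /=.
have ne : (p, q) <> (p', q') by move=> [_ E]; lia.
move/(_ ne); lia.
Qed.

Definition rho (y : int) := s (1, y) || s (1, y + 1).
Definition psi (x : int) := s (x, 1) || s (x + 1, 1).

Lemma baseX y p q : cov s 0 y p q -> (p == 1) = rho y.
Proof.
move=> c; have c0 := c; case: c => [h [e1 e2]]; rewrite /rho.
case: e1 => [E0|E]; last first.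
  rewrite add0r in E; subst p; rewrite eqxx; case: e2 => E2; subst q; by rewrite h ?orbT.
rewrite E0; apply/esym/negbTE/negP => /orP[h'|h'].
  have c' : cov s 0 y 1 y by covt.
  by have [? ?] := cov_uniq c0 c'; lia.
have c' : cov s 0 y 1 (y + 1) by covt.
by have [? ?] := cov_uniq c0 c'; lia.
Qed.

Lemma baseY x p q : cov s x 0 p q -> (q == 1) = psi x.
Proof.
move=> c; have c0 := c; case: c => [h [e1 e2]]; rewrite /psi.
case: e2 => [E0|E]; last first.
  rewrite add0r in E; subst q; rewrite eqxx; case: e1 => E2; subst p; by rewrite h ?orbT.
rewrite E0; apply/esym/negbTE/negP => /orP[h'|h'].
  have c' : cov s x 0 x 1 by covt.
  by have [? ?] := cov_uniq c0 c'; lia.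
have c' : cov s x 0 (x + 1) 1 by covt.
by have [? ?] := cov_uniq c0 c'; lia.
Qed.

End Struct.

Lemma detX s s' : valid s -> perfect s -> valid s' -> perfect s' ->
  forall y, rho s y = rho s' y ->
  forall n : nat, forall p q p' q', cov s n y p q -> cov s' n y p' q' -> p = p'.
Proof.
move=> vs ps vs' ps' y ry; elim=> [|n IH] p q p' q' c c'.
  have := baseX vs c; have := baseX vs' c'; rewrite -ry => <-.
  case: c => [_ [e _]]; case: c' => [_ [e' _]].
  move=> E; case: e => E1; case: e' => E2; subst; rewrite //= ?add0r in E *; lia.
have [p0 [q0 c0]] := cov_ex ps n y.
have [p0' [q0' c0']] := cov_ex ps' n y.
have E0 := IH _ _ _ _ c0 c0'; rewrite E0 in c0.
have E : Posz n.+1 = n + 1 by lia.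
rewrite E in c c'.
by rewrite (stepX vs c0 c) (stepX vs' c0' c').
Qed.

Lemma detY s s' : valid s -> perfect s -> valid s' -> perfect s' ->
  forall x, psi s x = psi s' x ->
  forall n : nat, forall p q p' q', cov s x n p q -> cov s' x n p' q' -> q = q'.
Proof.
move=> vs ps vs' ps' x ry; elim=> [|n IH] p q p' q' c c'.
  have := baseY vs c; have := baseY vs' c'; rewrite -ry => <-.
  case: c => [_ [_ e]]; case: c' => [_ [_ e']].
  move=> E; case: e => E1; case: e' => E2; subst; rewrite //= ?add0r in E *; lia.
have [p0 [q0 c0]] := cov_ex ps x n.
have [p0' [q0' c0']] := cov_ex ps' x n.
have E0 := IH _ _ _ _ c0 c0'; rewrite E0 in c0.
have E : Posz n.+1 = n + 1 by lia.
rewrite E in c c'.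
by rewrite (stepY vs c0 c) (stepY vs' c0' c').
Qed.

Lemma det s s' : valid s -> perfect s -> valid s' -> perfect s' ->
  forall x y : nat, rho s y = rho s' y -> psi s x = psi s' x ->
  s (Posz x, Posz y) -> s' (Posz x, Posz y).
Proof.
move=> vs ps vs' ps' x y ry px sxy.
have c : cov s x y x y by split => //; split; left.
have [p' [q' c']] := cov_ex ps' x y.
have E1 := detX vs ps vs' ps' ry c c'.
have E2 := detY vs ps vs' ps' px c c'.
by case: c' => [h _]; rewrite E1 E2.
Qed.

Definition Aset (N : nat) : {set {ffun 'I_N * 'I_N -> bool}} :=
  [set s | `[< valid (per_ext s) >] && `[< perfect (per_ext s) >]].

Lemma card_Aset N : (#|Aset N| <= 2 ^ N * 2 ^ N)%N.
Proof.
pose f (s : {ffun 'I_N * 'I_N -> bool}) :=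
  ([ffun y : 'I_N => rho (per_ext s) (Posz y)], [ffun x : 'I_N => psi (per_ext s) (Posz x)]).
have inj : {in Aset N &, injective f}.
  move=> s s'; rewrite !inE => /andP[/asboolP v1 /asboolP p1] /andP[/asboolP v2 /asboolP p2].
  rewrite /f => -[] /ffunP e1 /ffunP e2.
  apply/ffunP => i; rewrite -!per_ext_in.
  have r := e1 i.2; have q := e2 i.1; rewrite !ffunE in r q.
  apply/idP/idP; first exact: det v1 p1 v2 p2 _ _ r q.
  exact: det v2 p2 v1 p1 _ _ (esym r) (esym q).
rewrite -(card_in_imset inj).
apply: leq_trans (max_card _) _.
by rewrite card_prod !card_ffun !card_bool !card_ord.
Qed.

Local Close Scope ring_scope.

Fixpoint phase (M : nat) (b : nat -> bool) (m : nat) : bool :=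
  match m with
  | 0 => false
  | m'.+1 => if (m'.+1 <= M)%N then phase M b m' (+) b m' else false
  end.

Definition Cstrip (M : nat) (b : nat -> bool) (x : nat) : bool :=
  if odd x then ~~ phase M b x./2
  else [&& (0 < x)%N, phase M b (x./2).-1 & phase M b x./2].

Lemma half_odd j : (j.*2.+1)./2 = j.
Proof. by rewrite /= uphalf_double. Qed.
Lemma half_even j : (j.*2)./2 = j.
Proof. exact: doubleK. Qed.

Lemma C0 M b : Cstrip M b 0 = false.
Proof. by []. Qed.

Lemma C_odd M b m : Cstrip M b m.*2.+1 = ~~ phase M b m.
Proof. by rewrite /Cstrip oddS odd_double half_odd. Qed.

Lemma C_even M b m : Cstrip M b m.*2.+2 = phase M b m && phase M b m.+1.
Proof.
rewrite /Cstrip.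
have -> : (m.*2.+2)./2 = m.+1 by rewrite -doubleS half_even.
by rewrite !oddS odd_double negbK.
Qed.

Lemma C_noadj M b x : Cstrip M b x && Cstrip M b x.+1 = false.
Proof.
case: (boolP (odd x)) => ox.
- have -> : x = (x./2).*2.+1 by rewrite -[LHS]odd_double_half ox add1n.
  rewrite C_odd C_even.
  by case: (phase M b x./2).
- case: x ox => [|x] ox; first by [].
  have -> : x = (x./2).*2.+1.
    by rewrite -[LHS]odd_double_half; move: ox; rewrite oddS negbK => ->; rewrite add1n.
  rewrite C_even -[(x./2).*2.+3]/((x./2.+1).*2.+1) C_odd.
  by case: (phase M b x./2.+1); rewrite ?andbF.
Qed.

Lemma phase_large M b m : (M < m)%N -> phase M b m = false.
Proof. by case: m => //= m h; rewrite leqNgt h. Qed.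

Lemma sum_pairs (h : nat -> nat) S : (0 < S)%N ->
  \sum_(i < S.*2) h i = h 0 + \sum_(j < S.-1) (h j.*2.+1 + h j.*2.+2) + h S.*2.-1.
Proof.
case: S => // S _; elim: S => [|S IH].
  by rewrite /= !big_ord_recr !big_ord0 /= add0n addn0.
rewrite doubleS (big_ord_recr (S.+1).*2.+1) big_ord_recr /= IH.
rewrite [in RHS]big_ord_recr /= !doubleS /= !addnA.
by [].
Qed.

Lemma sum_half (h : nat -> nat) S :
  \sum_(j < S.*2) h j./2 = (\sum_(k < S) h k).*2.
Proof.
elim: S => [|S IH]; first by rewrite !big_ord0.
rewrite doubleS !big_ord_recr /= IH doubleD /= uphalf_double doubleK.
by rewrite -[(h S).*2]addnn addnA.
Qed.

Section Strip.
Variables (S : nat) (b : nat -> bool).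
Hypothesis S2 : (2 <= S)%N.
Let M := (S - 2)%N.
Let ph := phase M b.
Definition Cg (x : nat) := (x < S.*2)%N && Cstrip M b x.
Definition gap (x : nat) : nat := ~~ (Cg x || Cg x.+1).

Lemma gap_count :
  (\sum_(i < S.*2) gap i <= \sum_(j < S.-1) (ph j != ph j.+1))%N.
Proof.
rewrite sum_pairs; last by lia.
have g0 : gap 0 = 0%N.
  rewrite /gap /Cg (C_odd M b 0) /=; have -> : (1 < S.*2)%N by lia.
  by rewrite orbT.
have gl : gap S.*2.-1 = 0%N.
  rewrite /gap /Cg.
  have -> : S.*2.-1 = (S.-1).*2.+1 by lia.
  rewrite C_odd phase_large /=; last by rewrite /M; lia.
  by have -> : ((S.-1).*2.+1 < S.*2)%N by lia.
rewrite g0 gl add0n addn0; apply: leq_sum => j _.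
rewrite /gap /Cg.
have -> : ((j.*2.+1) < S.*2)%N by have := ltn_ord j; lia.
have -> : ((j.*2.+2) < S.*2)%N by have := ltn_ord j; lia.
have -> : ((j.*2.+3) < S.*2)%N by have := ltn_ord j; lia.
rewrite (C_odd M b j) (C_even M b j) (C_odd M b j.+1) /ph.
by case: (phase M b j); case: (phase M b j.+1).
Qed.

Lemma trans_bound :
  (\sum_(j < S.-1) (ph j != ph j.+1) <= \sum_(j < M) b j + 1)%N.
Proof.
have -> : S.-1 = M.+1 by rewrite /M; lia.
rewrite big_ord_recr /=; apply: leq_add; last by case: (_ != _).
rewrite leq_eqVlt; apply/orP; left; apply/eqP; apply: eq_bigr => j _.
rewrite /ph /=; have -> : (j < M)%N by [].
by case: (phase M b j); case: (b j).
Qed.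

Lemma trans_zero : (forall j, b j = false) ->
  \sum_(j < S.-1) (ph j != ph j.+1) = 0%N.
Proof.
move=> H; have P0 : forall m, ph m = false.
  by elim=> [|m IH] //=; rewrite /ph /=; case: ifP => //; rewrite -/ph IH H.
by rewrite big1 // => j _; rewrite !P0.
Qed.

End Strip.

Local Open Scope ring_scope.

Lemma modstep (N : nat) (z : int) : (0 < N)%N ->
  ((z + 1) %% N)%Z = if (z %% N)%Z == (N - 1)%:Z then 0 else (z %% N)%Z + 1.
Proof.
move=> N0.
have Np : (0 : int) < N by rewrite ltz_nat.
have Nn : (Posz N != 0) by rewrite gt_eqF.
rewrite -modzDml.
have a1 := ltz_pmod z Np; have a2 := modz_ge0 z Nn.
case: eqP => E.
  rewrite E; have -> : ((N - 1)%N%:Z + 1 = Posz N) by lia.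
  exact: modzz.
by apply: modz_small; lia.
Qed.

Section Family.
Variables (S : nat).
Hypothesis S2 : (2 <= S)%N.
Local Notation N := (S.*2).
Local Notation M := (S - 2)%N.

Definition bB (B : {ffun 'I_S * 'I_M -> bool}) (k j : nat) : bool :=
  if @insub _ (fun k => k < S)%N _ k is Some k' then
    if @insub _ (fun j => j < M)%N _ j is Some j' then B (k', j') else false
  else false.

Lemma bBE B (k : 'I_S) (j : 'I_M) : bB B k j = B (k, j).
Proof. by rewrite /bB !valK. Qed.

Definition Fint B (x y : int) : bool :=
  [&& (0 <= x < N), (0 <= y < N), odd `|y|%N & Cstrip M (bB B (`|y|%N./2)) `|x|%N].

Definition sB B : {ffun 'I_N * 'I_N -> bool} :=
  [ffun i : 'I_N * 'I_N => Fint B (Posz i.1) (Posz i.2)].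

Lemma N0 : (0 < N)%N. Proof. lia. Qed.

Lemma perB B (x y : int) : per_ext (sB B) (x, y) = Fint B (x %% N)%Z (y %% N)%Z.
Proof. by rewrite per_ext_ffun //; exact: N0. Qed.

Lemma Fint_x0 B y : Fint B 0 y = false.
Proof. by rewrite /Fint /= C0 !andbF. Qed.
Lemma Fint_y0 B x : Fint B x 0 = false.
Proof. by rewrite /Fint /= !andbF. Qed.

Lemma perB_in B (x y : int) : 0 <= x <= N -> 0 <= y <= N ->
  per_ext (sB B) (x, y) = Fint B x y.
Proof.
move=> hx hy; rewrite perB.
have Np : (0 : int) < N by rewrite ltz_nat; exact: N0.
have [xN|xN] : x = N \/ x < N by lia.
  rewrite xN modzz Fint_x0 /Fint; have -> : (0 <= Posz N < N) = false by lia.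
  by [].
have [yN|yN] : y = N \/ y < N by lia.
  rewrite yN modzz Fint_y0 /Fint; have -> : (0 <= Posz N < N) = false by lia.
  by rewrite andbF.
by rewrite !modz_small //; lia.
Qed.

Lemma Fint_range B x y : Fint B x y -> (0 <= x < N) /\ (0 <= y < N).
Proof. by case/and4P => -> ->. Qed.

Lemma noadjY B (x y x' : int) : per_ext (sB B) (x, y) -> per_ext (sB B) (x', y + 1) -> False.
Proof.
rewrite !perB modstep; last exact: N0.
move=> h1; have [_ r] := Fint_range _ _ _ h1.
case/and4P: h1 => _ _ o1 _.
case: eqP => E; first by rewrite Fint_y0.
case/and4P => _ _ o2 _.
have : absz ((y %% N)%Z + 1) = (absz (y %% N)%Z).+1 by lia.
by move=> e; rewrite e /= o1 in o2.
Qed.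

Lemma noadjX B (x y : int) : per_ext (sB B) (x, y) -> per_ext (sB B) (x + 1, y) -> False.
Proof.
rewrite !perB modstep; last exact: N0.
move=> h1; have [r _] := Fint_range _ _ _ h1.
case/and4P: h1 => _ _ _ c1.
case: eqP => E; first by rewrite Fint_x0.
case/and4P => _ _ _ c2.
have : absz ((x %% N)%Z + 1) = (absz (x %% N)%Z).+1 by lia.
move=> e; rewrite e in c2.
by have := C_noadj (S - 2) (bB B `|(y %% N)%Z|./2) `|(x %% N)%Z|; rewrite c1 c2.
Qed.

Lemma validB B : valid (per_ext (sB B)).
Proof.
move=> [u1 u2] [v1 v2] ne hu hv; apply/negPn/negP; rewrite /sep /= => ns.
have [E|[E|E]] : v2 = u2 + 1 \/ u2 = v2 + 1 \/ u2 = v2 by lia.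
- by rewrite E in hv; exact: noadjY _ _ _ _ hu hv.
- by rewrite E in hu; exact: noadjY _ _ _ _ hv hu.
have [E'|[E'|E']] : v1 = u1 + 1 \/ u1 = v1 + 1 \/ u1 = v1 by lia.
- by rewrite E' -E in hv; exact: noadjX _ _ _ hu hv.
- by rewrite E' E in hu; exact: noadjX _ _ _ hv hu.
- by apply: ne; rewrite E E'.
Qed.

Lemma occB B (i j : nat) : (i < N)%N -> (j < N)%N ->
  occ (per_ext (sB B)) (Posz i) (Posz j) =
  Cg S (bB B j./2) i || Cg S (bB B j./2) i.+1.
Proof.
move=> hi hj.
have e1 : Posz i + 1 = Posz i.+1 by lia.
have e2 : Posz j + 1 = Posz j.+1 by lia.
rewrite /occ e1 e2 !perB_in; try lia.
rewrite /Fint /Cg /=.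
have -> : (i < N)%N by [].
case: (boolP (odd j)) => oj.
- by rewrite !ltz_nat hi hj /= !andbF !orbF.
- have hj1 : (j.+1 < N)%N.
    have := odd_double_half j; rewrite (negbTE oj) add0n => Ej.
    rewrite -Ej in hj *; lia.
  rewrite !ltz_nat hi hj hj1 uphalf_half (negbTE oj) add0n /=.
  by rewrite !andbF.
Qed.

End Family.

Lemma sum_inj_le (R : realType) (I J : finType) (h : I -> J) (P : pred J) (F : J -> R) :
  injective h -> (forall i, P (h i)) -> (forall j, 0 <= F j) ->
  \sum_i F (h i) <= \sum_(j | P j) F j.
Proof.
move=> inj Ph F0.
have -> : \sum_i F (h i) = \sum_(i in [set: I]) F (h i).
  by apply: eq_bigl => i; rewrite inE.
rewrite -(big_imset _ (in2W inj)) /=.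
rewrite [X in _ <= X]big_mkcond [X in X <= _]big_mkcond /=.
apply: ler_sum => j _; case: ifP => jin.
  by case/imsetP: jin => i _ ->; rewrite Ph.
by case: ifP.
Qed.

Section Count.
Variable R : realType.
Variable S : nat.
Hypothesis S2 : (2 <= S)%N.
Local Notation N := (S.*2).
Local Notation M := (S - 2)%N.

Lemma nvacB (B : {ffun 'I_S * 'I_M -> bool}) :
  nvacant R (per_ext (sB B)) N N = (\sum_(k < S) \sum_(i < N) gap S (bB B k) i).*2.
Proof.
rewrite /nvacant.
transitivity (\sum_(i < N) \sum_(j < N) gap S (bB B j./2) i).
  apply: eq_bigr => i _; apply: eq_bigr => j _.
  by rewrite vacant_asbool occB.
rewrite exchange_big /=.
by rewrite (sum_half (fun k => \sum_(i < N) gap S (bB B k) i)).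
Qed.

Definition TB (B : {ffun 'I_S * 'I_M -> bool}) : nat :=
  \sum_(k < S) (\sum_(j < M) B (k, j) + 1).

Lemma nvacB_le (B : {ffun 'I_S * 'I_M -> bool}) : (nvacant R (per_ext (sB B)) N N <= (TB B).*2)%N.
Proof.
rewrite nvacB leq_double /TB; apply: leq_sum => k _.
apply: leq_trans (gap_count _ _ S2) _.
apply: leq_trans (trans_bound _ _ S2) _.
rewrite leq_add2r leq_eqVlt; apply/orP; left; apply/eqP; apply: eq_bigr => j _.
by rewrite bBE.
Qed.

Lemma nvacB0 : nvacant R (per_ext (sB (S:=S) [ffun => false])) N N = 0%N.
Proof.
rewrite nvacB big1 // => k _.
apply/eqP; rewrite -leqn0.
apply: leq_trans (gap_count _ _ S2) _.
rewrite leqn0 trans_zero // => j.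
rewrite /bB; case: insub => // k'; case: insub => // j'.
by rewrite ffunE.
Qed.

Lemma inOmegaB (B : {ffun 'I_S * 'I_M -> bool}) : `[< in_Omega R (per_ext (sB B)) >].
Proof. by apply/asboolP/in_OmegaE; exact: validB. Qed.

Lemma phase_step b j : (j < M)%N -> phase M b j.+1 = phase M b j (+) b j.
Proof. by move=> h /=; rewrite h. Qed.

Lemma FintE_odd (B : {ffun 'I_S * 'I_M -> bool}) (m k : nat) : (m < S)%N -> (k < S)%N ->
  Fint B (Posz m.*2.+1) (Posz k.*2.+1) = ~~ phase M (bB B k) m.
Proof.
move=> hm hk; rewrite /Fint /=.
have -> : (Posz m.*2.+1 < Posz N) by rewrite ltz_nat; lia.
have -> : (Posz k.*2.+1 < Posz N) by rewrite ltz_nat; lia.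
by rewrite odd_double uphalf_double C_odd.
Qed.

Lemma sB_inj : injective (@sB S).
Proof.
move=> B B' E; apply/ffunP => [[k j]].
have P : forall m, (m < S)%N -> phase M (bB B k) m = phase M (bB B' k) m.
  move=> m hm; have hk := ltn_ord k.
  have := congr1 (fun s => per_ext s (Posz m.*2.+1, Posz k.*2.+1)) E => /=.
  rewrite !perB_in; try (rewrite ?ltz_nat; lia).
  rewrite !FintE_odd //.
  by move/negb_inj.
have hj : (j < M)%N by [].
rewrite -!bBE.
have e1 := phase_step (bB B k) j hj; have e2 := phase_step (bB B' k) j hj.
have e3 : phase M (bB B k) j.+1 = phase M (bB B' k) j.+1 by apply: P; lia.
have e4 : phase M (bB B k) j = phase M (bB B' k) j by apply: P; lia.
move: e1 e2; rewrite e3 e4 => ->.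
by case: (phase M (bB B' k) j); case: (bB B k j); case: (bB B' k j).
Qed.

End Count.

Section Weights.
Variable R : realType.

Lemma weight_ge0 (lam : R) W H s : 0 <= weight lam W H s.
Proof. exact: powR_ge0. Qed.

Lemma weight_lb (lam : R) W H s (T : nat) : 1 <= lam ->
  (nvacant R s W H <= T.*2)%N ->
  (lam `^ (- 2^-1)) ^+ T <= weight lam W H s.
Proof.
move=> l1 hn; rewrite /weight.
rewrite -powR_mulrn; last exact: powR_ge0.
rewrite -powRrM; apply: ler_powR => //.
have : (nvacant R s W H)%:R <= (T.*2)%:R :> R by rewrite ler_nat.
rewrite -mul2n natrM; lra.
Qed.

Lemma sum_TB (S : nat) (mu : R) :
  \sum_(B : {ffun 'I_S * 'I_(S - 2) -> bool}) mu ^+ (TB B) = mu ^+ S * (1 + mu) ^+ (S * (S - 2)).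
Proof.
transitivity (\sum_(B : {ffun 'I_S * 'I_(S - 2) -> bool})
               (mu ^+ S * \prod_(p : 'I_S * 'I_(S - 2)) mu ^+ B p)).
  apply: eq_bigr => B _; rewrite /TB expr_sum.
  under eq_bigr do rewrite exprD expr1 expr_sum.
  rewrite big_split /= mulrC; congr (_ * _).
    by rewrite prodr_const card_ord.
  by rewrite pair_big /=; apply: eq_bigr => -[k j].
rewrite -mulr_sumr; congr (_ * _).
rewrite -(bigA_distr_bigA (fun (p : 'I_S * 'I_(S - 2)) (b : bool) => mu ^+ b)) /=.
rewrite (eq_bigr (fun _ => 1 + mu)); last by move=> p _; rewrite big_bool /= expr1 expr0 addrC.
by rewrite prodr_const card_prod !card_ord.
Qed.

Definition Zden (lam : R) (N : nat) :=
  \sum_(s : {ffun 'I_N * 'I_N -> bool} | `[< in_Omega R (per_ext s) >])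
      weight lam N N (per_ext s).

Variable S : nat.
Hypothesis S2 : (2 <= S)%N.

Lemma Z_ge1 (lam : R) : 1 <= Zden lam S.*2.
Proof.
rewrite /Zden (bigD1 (sB (S:=S) [ffun => false])); last exact: inOmegaB.
rewrite /= {1}/weight (@nvacB0 R S S2) mulr0 powRr0 lerDl.
by apply: sumr_ge0 => s _; exact: weight_ge0.
Qed.

Lemma Z_lb (lam : R) : 1 <= lam ->
  (lam `^ (- 2^-1)) ^+ S * (1 + lam `^ (- 2^-1)) ^+ (S * (S - 2)) <= Zden lam S.*2.
Proof.
move=> l1; rewrite -sum_TB.
have HH := @sum_inj_le R _ _ (@sB S) (fun s => `[< in_Omega R (per_ext s) >])
  (fun s => weight lam S.*2 S.*2 (per_ext s)) (sB_inj S2) (inOmegaB R S2)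
  (fun s => weight_ge0 lam S.*2 S.*2 (per_ext s)).
rewrite /Zden; apply: (le_trans _ HH).
apply: ler_sum => B _; apply: weight_lb => //.
exact: nvacB_le.
Qed.

End Weights.

Section MuBounds.
Variable R : realType.
Variable S : nat.
Hypothesis S2 : (2 <= S)%N.
Local Notation N := (S.*2).
Local Notation Tidx := ((bool * 'I_(N %/ (2 * 1))) * (bool * 'I_(N %/ (2 * 1))))%type.

Lemma Num_ge0 (lam : R) (G : config -> R) : (forall s, 0 <= G s) ->
  0 <= \sum_(s : {ffun 'I_N * 'I_N -> bool} | `[< in_Omega R (per_ext s) >])
      weight lam N N (per_ext s) * G (per_ext s).
Proof. by move=> G0; apply: sumr_ge0 => s _; apply: mulr_ge0 => //; exact: weight_ge0. Qed.

Lemma mu_per_E (lam : R) G :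
  mu_per lam N N G =
  (\sum_(s : {ffun 'I_N * 'I_N -> bool} | `[< in_Omega R (per_ext s) >])
      weight lam N N (per_ext s) * G (per_ext s)) / Zden R lam N.
Proof. by []. Qed.

Lemma prod_vac (a b : int) (sig : config) :
  \prod_(t : Tidx) vacant_ind R a b (fun u => sig (@tauR a b 1 1 N N t u)) =
  ([forall t : Tidx, ~~ occ (fun u => sig (@tauR a b 1 1 N N t u)) a b])%:R.
Proof.
rewrite -prod_ind; apply: eq_bigr => t _.
by rewrite /vacant_ind vacant_asbool.
Qed.

Lemma prod_occ (a b : int) (sig : config) :
  \prod_(t : Tidx) occupied_ind R a b (fun u => sig (@tauR a b 1 1 N N t u)) =
  ([forall t : Tidx, occ (fun u => sig (@tauR a b 1 1 N N t u)) a b])%:R.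
Proof.
rewrite -prod_ind; apply: eq_bigr => t _.
by rewrite /occupied_ind occupied_asbool.
Qed.

Lemma nvac_empty : nvacant R (per_ext [ffun _ : 'I_N * 'I_N => false]) N N = (N * N)%N.
Proof.
rewrite /nvacant (eq_bigr (fun _ => N)); first by rewrite sum_nat_const card_ord.
move=> i _; rewrite (eq_bigr (fun _ => 1%N)); first by rewrite sum_nat_const card_ord muln1.
move=> j _; rewrite vacant_asbool /occ.
have E : forall u, per_ext [ffun _ : 'I_N * 'I_N => false] u = false.
  by move=> u; apply/negbTE/negP => /existsP [i0] /and3P[_ _]; rewrite ffunE.
by rewrite !E.
Qed.

Lemma part1_mu (lam : R) (a b : int) : 0 < lam ->
  mu_per lam N N (fun sig => \prod_(t : Tidx) vacant_ind R a b (fun u => sig (@tauR a b 1 1 N N t u)))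
  <= lam `^ (- 4^-1 * (N * N)%N%:R).
Proof.
move=> l0; rewrite mu_per_E.
set c := lam `^ _.
have Z1 := @Z_ge1 R S S2 lam.
have Zp : 0 < Zden R lam N by apply: lt_le_trans Z1.
rewrite ler_pdivrMr //.
apply: le_trans (_ : c <= c * Zden R lam N); last first.
  by rewrite ler_peMr // powR_ge0.
set s0 := [ffun _ : 'I_N * 'I_N => false].
apply: le_trans (_ : \sum_(s | `[< in_Omega R (per_ext s) >]) (s == s0)%:R * c <= c).
  apply: ler_sum => s _; rewrite prod_vac.
  case: (boolP [forall t : Tidx, _]) => [/forallP H|_]; last by rewrite mulr0 mulr_ge0 // powR_ge0.
  have H' := @all_faces N S s negb a b (ltnW S2) (esym (mul2n S)) H.
  have -> : s = s0.
    apply/ffunP => i; rewrite ffunE -per_ext_in.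
    by have := H' (Posz i.1) (Posz i.2); rewrite /occ; case: (per_ext s _).
  by rewrite eqxx mulr1 mul1r /weight nvac_empty.
apply: le_trans (_ : _ <= \sum_s (s == s0)%:R * c) _.
  rewrite [X in X <= _]big_mkcond /=; apply: ler_sum => s _.
  by case: ifP => // _; rewrite mulr_ge0 // powR_ge0.
rewrite (bigD1 s0) //= eqxx mul1r big1 ?addr0 // => s /negbTE ->.
by rewrite mul0r.
Qed.

Lemma part2_mu (lam : R) (a b : int) : 1 <= lam ->
  mu_per lam N N (fun sig => \prod_(t : Tidx) occupied_ind R a b (fun u => sig (@tauR a b 1 1 N N t u)))
  <= (2 ^ N * 2 ^ N)%N%:R /
     ((lam `^ (- 2^-1)) ^+ S * (1 + lam `^ (- 2^-1)) ^+ (S * (S - 2))).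
Proof.
move=> l1; rewrite mu_per_E.
set D := (_ ^+ S * _).
have Dp : 0 < D by rewrite /D mulr_gt0 // exprn_gt0 // ?addr_gt0 // powR_gt0 //; lra.
have ZD := @Z_lb R S S2 lam l1.
have Zp : 0 < Zden R lam N by apply: lt_le_trans ZD.
apply: (le_trans (_ : _ <= (#|Aset N|)%:R / Zden R lam N) _).
  rewrite ler_pM2r ?invr_gt0 //.
  apply: (le_trans (_ : _ <= \sum_(s | `[< in_Omega R (per_ext s) >]) (s \in Aset N)%:R) _).
    apply: ler_sum => s /asboolP Om; rewrite prod_occ.
    case: (boolP [forall t : Tidx, _]) => [/forallP H|_]; last first.
      by rewrite mulr0; case: (s \in Aset N).
    have H' := @all_faces N S s id a b (ltnW S2) (esym (mul2n S)) H.
    have -> : s \in Aset N.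
      rewrite inE; apply/andP; split; apply/asboolP; last exact: H'.
      exact: (proj1 (in_OmegaE _ _) Om).
    rewrite mulr1 /weight -[X in _ <= X](powRr0 lam); apply: ler_powR => //.
  apply: le_trans (_ : _ <= \sum_s (s \in Aset N)%:R) _.
    rewrite [X in X <= _]big_mkcond /=; apply: ler_sum => s _.
    by case: ifP => // _; case: (s \in Aset N).
  rewrite (eq_bigr (fun s => if s \in Aset N then 1 else 0)); last by move=> s _; case: (s \in Aset N).
  by rewrite -big_mkcond /= sumr_const.
apply: (le_trans (_ : _ <= (#|Aset N|)%:R / D) _).
  by apply: ler_wpM2l => //; rewrite lef_pV2 // posrE.
rewrite ler_pM2r ?invr_gt0 // ler_nat; exact: card_Aset.
Qed.

End MuBounds.

Lemma bern (R : realFieldType) (h : R) (n : nat) : 0 <= h -> 1 + n%:R * h <= (1 + h) ^+ n.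
Proof.
move=> h0; elim: n => [|n IH]; first by rewrite mul0r addr0 expr0.
rewrite exprS -natr1.
have h1 : 0 <= n%:R * h by rewrite mulr_ge0.
nra.
Qed.

Lemma arith (R : realFieldType) (mu a : R) (S : nat) : 0 < mu -> 0 <= a -> (2 <= S)%N ->
  16 * (1 + mu) ^+ 2 <= mu * ((1 + mu) * a ^+ 4) ^+ S ->
  (2 ^ S.*2 * 2 ^ S.*2)%N%:R / (mu ^+ S * (1 + mu) ^+ (S * (S - 2))) <= a ^+ (S.*2 * S.*2).
Proof.
move=> m0 a0 S2 H.
have p1 : 0 < 1 + mu by lra.
have D0 : 0 < mu ^+ S * (1 + mu) ^+ (S * (S - 2)) by rewrite mulr_gt0 // exprn_gt0.
rewrite ler_pdivrMr //.
have X0 : 0 <= 16 * (1 + mu) ^+ 2 by rewrite mulr_ge0 // ?exprn_ge0 //; lra.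
have Y0 : 0 <= mu * ((1 + mu) * a ^+ 4) ^+ S.
  by rewrite mulr_ge0 ?exprn_ge0 ?mulr_ge0 ?exprn_ge0 //; lra.
have := lerXn2r S (x:=16 * (1 + mu) ^+ 2) (y := mu * ((1 + mu) * a ^+ 4) ^+ S).
rewrite !nnegrE => /(_ X0 Y0 H).
have eL : (16 * (1 + mu) ^+ 2) ^+ S = 16 ^+ S * (1 + mu) ^+ (2 * S).
  by rewrite exprMn exprM.
have eR : (mu * ((1 + mu) * a ^+ 4) ^+ S) ^+ S =
    mu ^+ S * ((1 + mu) ^+ (S * S) * a ^+ (4 * (S * S))).
  by rewrite exprMn -exprM exprMn -exprM.
rewrite eL eR.
have E1 : (S * S = S * (S - 2) + 2 * S)%N by clear -S2; case: S S2 => [|[|T]] // _; nia.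
rewrite E1 exprD.
have E2 : (16 : R) ^+ S = (2 ^ S.*2 * 2 ^ S.*2)%N%:R.
  rewrite natrM !natrX -exprD.
  have -> : (16 : R) = 2 ^+ 4 by rewrite -natrX.
  by rewrite -exprM; congr (_ ^+ _); lia.
rewrite E2.
have E3 : (4 * (S * (S - 2) + 2 * S) = S.*2 * S.*2)%N by rewrite -E1; nia.
rewrite E3.
set P := (1 + mu) ^+ (2 * S).
have P0 : 0 < P by rewrite exprn_gt0.
set A := (2 ^ S.*2 * 2 ^ S.*2)%N%:R.
set Q := (1 + mu) ^+ (S * (S - 2)).
set T := a ^+ (S.*2 * S.*2).
move=> h.
move: h; rewrite (_ : mu ^+ S * (Q * P * T) = (T * (mu ^+ S * Q)) * P); last by ring.
by rewrite ler_pM2r.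
Qed.
Section Final.
Variable R : realType.

Lemma card_T S :
  #|{: (bool * 'I_(S.*2 %/ (2 * 1))) * (bool * 'I_(S.*2 %/ (2 * 1)))}| = (S.*2 * S.*2)%N.
Proof.
rewrite card_prod !card_prod !card_bool !card_ord.
have -> : (S.*2 %/ (2 * 1) = S)%N by rewrite muln1 -mul2n mulKn.
by rewrite -mul2n.
Qed.

Lemma mu_ge0 (lam : R) S (G : config -> R) : (2 <= S)%N -> (forall s, 0 <= G s) ->
  0 <= mu_per lam S.*2 S.*2 G.
Proof.
move=> S2 G0; rewrite mu_per_E; apply: divr_ge0; first exact: Num_ge0.
by apply: le_trans (@Z_ge1 R S S2 lam).
Qed.

Lemma normRL1 (lam : R) (a b : int) S : 0 < lam -> (2 <= S)%N ->
  normRL lam a b 1 1 S.*2 S.*2 (vacant_ind R a b) <= lam `^ (- 4^-1).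
Proof.
move=> l0 S2; rewrite /normRL card_T.
set K := (S.*2 * S.*2)%N.
have K0 : (0 < K)%N by rewrite /K; lia.
have Kr : (K%:R : R) != 0 by rewrite pnatr_eq0 -lt0n.
have m0 := @mu_ge0 lam S (fun sig => \prod_(t : (bool * 'I_(S.*2 %/ (2 * 1))) * (bool * 'I_(S.*2 %/ (2 * 1))))
   vacant_ind R a b (fun u => sig (@tauR a b 1 1 S.*2 S.*2 t u))) S2.
have hm := @part1_mu R S S2 lam a b l0.
apply: le_trans (_ : (lam `^ (- 4^-1 * K%:R)) `^ (K%:R^-1) <= _).
  apply: ge0_ler_powR => //.
  - rewrite nnegrE; apply: m0 => s; apply: prodr_ge0 => t _.
    by rewrite /vacant_ind ler0n.
  - by rewrite nnegrE powR_ge0.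
by rewrite -powRrM -mulrA mulfV // mulr1.
Qed.

Lemma normRL2 (lam : R) (a b : int) S (c : R) : 1 <= lam -> (2 <= S)%N ->
  0 <= 1 - c * lam `^ (- 2^-1) ->
  16 * (1 + lam `^ (- 2^-1)) ^+ 2 <=
    lam `^ (- 2^-1) * ((1 + lam `^ (- 2^-1)) * (1 - c * lam `^ (- 2^-1)) ^+ 4) ^+ S ->
  normRL lam a b 1 1 S.*2 S.*2 (occupied_ind R a b) <= 1 - c * lam `^ (- 2^-1).
Proof.
move=> l1 S2 a0 H; rewrite /normRL card_T.
set K := (S.*2 * S.*2)%N.
set A := 1 - c * _.
have K0 : (0 < K)%N by rewrite /K; lia.
have Kr : (K%:R : R) != 0 by rewrite pnatr_eq0 -lt0n.
have m0 := @mu_ge0 lam S (fun sig => \prod_(t : (bool * 'I_(S.*2 %/ (2 * 1))) * (bool * 'I_(S.*2 %/ (2 * 1))))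
   occupied_ind R a b (fun u => sig (@tauR a b 1 1 S.*2 S.*2 t u))) S2.
have hm := @part2_mu R S S2 lam a b l1.
have mp : 0 < lam `^ (- 2^-1) by apply: powR_gt0; lra.
have ha := @arith _ _ _ _ mp a0 S2 H.
apply: le_trans (_ : (A ^+ K) `^ (K%:R^-1) <= _).
  apply: ge0_ler_powR => //.
  - rewrite nnegrE; apply: m0 => s; apply: prodr_ge0 => t _.
    by rewrite /occupied_ind ler0n.
  - by rewrite nnegrE exprn_ge0.
  - exact: le_trans hm ha.
by rewrite -powR_mulrn // -powRrM mulfV // powRr1.
Qed.

End Final.

Lemma esup_le (R : realType) (u : nat -> R) (x : R) (N : nat) :
  (forall n, (N <= n)%N -> u n <= x) -> (limn_esup (fun n => (u n)%:E) <= x%:E)%E.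
Proof.
move=> H; rewrite limn_esup_lim; apply: lime_le; first exact: is_cvg_esups.
exists N => // m /= Nm; apply: ub_ereal_sup => _ [k /= mk <-].
by rewrite lee_fin; apply: H; apply: leq_trans mk.
Qed.

Lemma fact_half n : (2 <= n)%N -> n`! = (n`!./2).*2.
Proof.
move=> n2; have d : (2 %| n`!)%N by apply: dvdn_fact; rewrite n2.
rewrite dvdn2 in d.
by rewrite -[LHS]odd_double_half (negbTE d) add0n.
Qed.

Lemma fact_S2 n : (4 <= n)%N -> (2 <= n`!./2)%N.
Proof. move=> n4; have n2 : (2 <= n)%N by lia. have := fact_geq n; have := fact_half n n2; lia. Qed.

Lemma half_fact_ge K n : (4 <= n)%N -> (K.*2.+2 <= n)%N -> (K <= n`!./2)%N.
Proof.
move=> n4 nK; have n2 : (2 <= n)%N by lia.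
have := fact_geq n; have := fact_half n n2; lia.
Qed.

Lemma le42 n : (4 <= n)%N -> (2 <= n)%N.
Proof. lia. Qed.

Lemma quart (R : realType) (x : R) : 0 <= x <= 1 -> 1 - 4 * x <= (1 - x) ^+ 4.
Proof.
move=> /andP[x0 x1].
have -> : (1 - x) ^+ 4 = 1 - 4 * x + x ^+ 2 * (6 - 4 * x + x ^+ 2) by ring.
have : 0 <= x ^+ 2 * (6 - 4 * x + x ^+ 2).
  by apply: mulr_ge0; [exact: sqr_ge0 | nra].
lra.
Qed.

Lemma mu_sq (R : realType) (lam : R) : 0 < lam -> (lam `^ (- 2^-1)) ^+ 2 = lam^-1.
Proof.
move=> l0; rewrite -powR_mulrn ?powR_ge0 // -powRrM.
have -> : - 2^-1 * 2%:R = -1 :> R by field.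
by rewrite powR_inv1 // ltW.
Qed.

Unset Implicit Arguments.

Theorem corollary4p5 (R : realType) (a b : int) :
  (forall lam : R, 0 < lam ->
     (normR lam a b 1 1 (vacant_ind R a b) <= (lam `^ (- (4%:R^-1)))%:E)%E) /\
  (forall c : R, c < 4%:R^-1 ->
     \forall lam \near +oo%R,
       (normR lam a b 1 1 (occupied_ind R a b)
          <= (1 - c * lam `^ (- (2%:R^-1)))%:E)%E).
Proof.
split.
  move=> lam l0; rewrite /normR; apply: (@esup_le R _ _ 4) => n n4.
  have n2 := le42 n n4.
  rewrite (fact_half n n2).
  exact: normRL1 l0 (fact_S2 n n4).
move=> c c4.
set c' := Num.max c 8^-1.
have c'1 : 8^-1 <= c' by rewrite /c' le_max lexx orbT.
have c'2 : c' < 4^-1 by rewrite /c' gt_max c4 /=; lra.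
have cc' : c <= c' by rewrite /c' le_max lexx.
set eps := (1 - 4 * c') / (8 * c').
have ep : 0 < eps by apply: divr_gt0; lra.
have e8 : eps * (8 * c') = 1 - 4 * c' by rewrite /eps mulfVK //; lra.
exists (Num.max 1 (eps ^-2)); split; first exact: num_real.
move=> lam; rewrite gt_max => /andP[l1 le].
have l0 : 0 < lam by lra.
set mu := lam `^ (- 2^-1).
have mp : 0 < mu by apply: powR_gt0.
have m2 : mu ^+ 2 < eps ^+ 2.
  by rewrite mu_sq // -[X in _ < X]invrK ltf_pV2 ?posrE ?invr_gt0 ?exprn_gt0.
have me : mu < eps.
  rewrite ltNge; apply/negP => h.
  have := ler_pM (ltW ep) (ltW ep) h h; rewrite -!expr2; lra.
have ce : c' * eps = (1 - 4 * c') / 8 by rewrite /eps; field; lra.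
have cme : c' * mu <= c' * eps by rewrite ler_pM2l ?ltW //; lra.
have cm0 : 0 <= c' * mu by rewrite mulr_ge0 ?ltW //; lra.
set A := 1 - c' * mu.
have A0 : 0 <= A by rewrite /A; lra.
set kap := (1 - 4 * c') * mu / 2.
have kp : 0 < kap by rewrite /kap; apply: divr_gt0 => //; apply: mulr_gt0 => //; lra.
set q := (1 + mu) * A ^+ 4.
have qk : 1 + kap <= q.
  have h4 : 1 - 4 * (c' * mu) <= A ^+ 4 by apply: quart; apply/andP; split; lra.
  have h5 : (1 + mu) * (1 - 4 * (c' * mu)) <= q by rewrite /q ler_pM2l //; lra.
  have id : (1 + mu) * (1 - 4 * (c' * mu)) - (1 + kap) = mu * (1 - 4 * c' - 8 * (c' * mu)) / 2.
    by rewrite /kap; field.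
  have h6 : 0 <= mu * (1 - 4 * c' - 8 * (c' * mu)) / 2.
    by apply: divr_ge0 => //; apply: mulr_ge0; [exact: ltW | lra].
  lra.
set B0 := 16 * (1 + mu) ^+ 2 / (mu * kap).
have B00 : 0 <= B0 by rewrite /B0 divr_ge0 // ?mulr_ge0 // ?sqr_ge0 ?ltW //; lra.
set K := Num.Def.archi_bound B0.
have BK : B0 < K%:R by exact: archi_boundP.
rewrite /normR; apply: (@esup_le R _ _ (maxn 4 (K.*2.+2))) => n; rewrite geq_max => /andP[n4 nK].
have n2 := le42 n n4.
have Sge := half_fact_ge K n n4 nK.
rewrite (fact_half n n2).
apply: le_trans (_ : 1 - c' * mu <= _); last by rewrite lerD2l lerN2 ler_pM2r.
apply: normRL2; [lra | exact: fact_S2 n n4 | exact: A0 | ].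
set S := n`!./2.
have SK : B0 <= S%:R by apply: le_trans (ltW BK) _; rewrite ler_nat.
have qS : 1 + S%:R * (q - 1) <= q ^+ S.
  have q1 : 0 <= q - 1 by lra.
  have := @bern R (q - 1) S q1; rewrite (_ : 1 + (q - 1) = q) //; ring.
have mk : 0 < mu * kap by apply: mulr_gt0.
have h16 : 16 * (1 + mu) ^+ 2 <= mu * kap * S%:R.
  have : B0 * (mu * kap) <= S%:R * (mu * kap) by rewrite ler_pM2r.
  rewrite /B0 mulfVK ?gt_eqF // => h; by rewrite [X in _ <= X]mulrC.
apply: le_trans h16 _.
rewrite -mulrA ler_pM2l // mulrC.
have S0 : (0 < S)%N by have := fact_S2 n n4; rewrite -/S => h; apply: leq_trans h.
have : S%:R * kap <= S%:R * (q - 1) by rewrite ler_pM2l ?ltr0n //; lra.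
lra.
Qed.
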